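(* Fix $k\ge0$. Let $\mathcal G$ be a discrete groupoid acting self-similarly on a locally convex $(k+1)$-graph $\Lambda$, and let $\Gamma=d^{-1}(\mathbb N^k\times\{0\})$. Then every finite subset $F\subseteq v(\Gamma\bowtie\mathcal G)$ ($v\in\Lambda^0$) that is exhaustive in $\Gamma\bowtie\mathcal G$ is exhaustive in $\Lambda\bowtie\mathcal G$.
   Context: A $(k+1)$-graph is a countable small category $\Lambda$ with a functor $d:\Lambda\to\mathbb N^{k+1}$ with unique factorisation (whenever $d(\lambda)=m+n$ there are unique $\mu,\nu$ with $\lambda=\mu\nu$, $d(\mu)=m$, $d(\nu)=n$); $\Lambda^n=d^{-1}(n)$. Locally convex: for $i\ne j$, if $e\in\Lambda^{e_i}$ and $r(e)\Lambda^{e_j}\ne\emptyset$ then $s(e)\Lambda^{e_j}\ne\emptyset$. A self-similar action of a discrete groupoid $\mathcal G$ ($\mathcal G^0=\Lambda^0$) on $\Lambda$: left action $g\triangleright\lambda\in\Lambda$, right action $g\triangleleft\lambda\in\mathcal G$ (for $s(g)=r(\lambda)$) with $s(g\triangleright\lambda)=r(g\triangleleft\lambda)$, $g\triangleright(\lambda\mu)=(g\triangleright\lambda)((g\triangleleft\lambda)\triangleright\mu)$, $(gh)\triangleleft\lambda=(g\triangleleft(h\triangleright\lambda))(h\triangleleft\lambda)$, $d(g\triangleright\lambda)=d(\lambda)$. $\Lambda\bowtie\mathcal G$ has morphisms $\lambda g$ ($s(\lambda)=r(g)$), product $\lambda g\mu h=\lambda(g\triangleright\mu)(g\triangleleft\mu)h$;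 $\Gamma\bowtie\mathcal G$ is a subcategory. For a category $\mathcal C$ and $v\in\mathcal C^0$, $F\subseteq v\mathcal C$ is exhaustive in $\mathcal C$ if for every $c\in v\mathcal C$ there is $a\in F$ with $c\mathcal C\cap a\mathcal C\ne\emptyset$. *)

(* Defs.v *)
From Stdlib Require List.
From mathcomp Require Import all_boot.
Set Implicit Arguments. Unset Strict Implicit. Unset Printing Implicit Defensive.

(** Composition [comp a b] is "a then-after b" (= ab in the paper), meaningful
    when [s a = r b]. *)
Record kgraph (n : nat) := KGraph {
  Obj  : Type;
  Mor  : countType;
  r    : Mor -> Obj;
  s    : Mor -> Obj;
  idm  : Obj -> Mor;
  comp : Mor -> Mor -> Mor;
  deg  : Mor -> 'I_n -> nat
}.
Arguments r {n L} : rename.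
Arguments s {n L} : rename.
Arguments idm {n L} : rename.
Arguments comp {n L} : rename.
Arguments deg {n L} : rename.

Definition is_kgraph (n : nat) (L : kgraph n) : Prop :=
  (forall v : Obj L, r (idm v) = v /\ s (idm v) = v) /\
  (forall a b : Mor L, s a = r b -> r (comp a b) = r a /\ s (comp a b) = s b) /\
  (forall a : Mor L, comp (idm (r a)) a = a /\ comp a (idm (s a)) = a) /\
  (forall a b c : Mor L, s a = r b -> s b = r c ->
      comp (comp a b) c = comp a (comp b c)) /\
  (forall (v : Obj L) i, deg (idm v) i = 0) /\
  (forall a b : Mor L, s a = r b -> forall i, deg (comp a b) i = deg a i + deg b i) /\
  (forall (l : Mor L) (m p : 'I_n -> nat), (forall i, deg l i = m i + p i) ->
     (exists mu nu : Mor L, s mu = r nu /\ l = comp mu nu /\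
        (forall i, deg mu i = m i) /\ (forall i, deg nu i = p i)) /\
     (forall mu nu mu' nu' : Mor L,
        s mu = r nu -> l = comp mu nu -> (forall i, deg mu i = m i) -> (forall i, deg nu i = p i) ->
        s mu' = r nu' -> l = comp mu' nu' -> (forall i, deg mu' i = m i) -> (forall i, deg nu' i = p i) ->
        mu = mu' /\ nu = nu')).

Definition deg_is_unit (n : nat) (L : kgraph n) (l : Mor L) (i : 'I_n) : Prop :=
  forall j, deg l j = (j == i).

Definition locally_convex (n : nat) (L : kgraph n) : Prop :=
  forall (i j : 'I_n), i != j -> forall e : Mor L, deg_is_unit e i ->
    (exists f : Mor L, r f = r e /\ deg_is_unit f j) ->
    (exists f : Mor L, r f = s e /\ deg_is_unit f j).

Record groupoid (O : Type) := Groupoid {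
  GMor : Type;
  gr   : GMor -> O;
  gs   : GMor -> O;
  gid  : O -> GMor;
  gmul : GMor -> GMor -> GMor;   (* gmul g h = gh, meaningful when gs g = gr h *)
  ginv : GMor -> GMor
}.
Arguments gr {O G} : rename.
Arguments gs {O G} : rename.
Arguments gid {O G} : rename.
Arguments gmul {O G} : rename.
Arguments ginv {O G} : rename.

Definition is_groupoid (O : Type) (G : groupoid O) : Prop :=
  (forall v : O, gr (@gid _ G v) = v /\ gs (@gid _ G v) = v) /\
  (forall g h : GMor G, gs g = gr h -> gr (gmul g h) = gr g /\ gs (gmul g h) = gs h) /\
  (forall g : GMor G, gmul (gid (gr g)) g = g /\ gmul g (gid (gs g)) = g) /\
  (forall g h l : GMor G, gs g = gr h -> gs h = gr l ->
      gmul (gmul g h) l = gmul g (gmul h l)) /\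
  (forall g : GMor G, gr (ginv g) = gs g /\ gs (ginv g) = gr g /\
      gmul g (ginv g) = gid (gr g) /\ gmul (ginv g) g = gid (gs g)).

Record ss_action (n : nat) (L : kgraph n) (G : groupoid (Obj L)) := SSAction {
  act : GMor G -> Mor L -> Mor L;    (* g |> l, meaningful when gs g = r l *)
  res : GMor G -> Mor L -> GMor G    (* g <| l, meaningful when gs g = r l *)
}.
Arguments act {n L G} : rename.
Arguments res {n L G} : rename.

Definition is_self_similar (n : nat) (L : kgraph n) (G : groupoid (Obj L))
    (A : @ss_action n L G) : Prop :=
  (forall g l, gs g = r l -> r (act A g l) = gr g) /\
  (forall l, act A (gid (r l)) l = l) /\
  (forall g h l, gs g = gr h -> gs h = r l -> act A (gmul g h) l = act A g (act A h l)) /\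
  (forall g l, gs g = r l -> forall i, deg (act A g l) i = deg l i) /\
  (forall g l, gs g = r l -> gr (res A g l) = s (act A g l) /\ gs (res A g l) = s l) /\
  (forall g, res A g (idm (gs g)) = g) /\
  (forall g l mu, gs g = r l -> s l = r mu ->
      act A g (comp l mu) = comp (act A g l) (act A (res A g l) mu)) /\
  (forall g l mu, gs g = r l -> s l = r mu ->
      res A g (comp l mu) = res A (res A g l) mu) /\
  (forall g h l, gs g = gr h -> gs h = r l ->
      res A (gmul g h) l = gmul (res A g (act A h l)) (res A h l)).

(** Morphisms are pairs [(l, g)] with [s l = gr g]; range [r l], source [gs g].
    A subcategory is given by a predicate [P] on the Λ-component. *)
Section ZS.
Variables (n : nat) (L : kgraph n) (G : groupoid (Obj L)) (A : @ss_action n L G).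

Definition zs_mor (P : Mor L -> Prop) (x : Mor L * GMor G) : Prop :=
  P x.1 /\ s x.1 = gr x.2.
Definition zs_r (x : Mor L * GMor G) : Obj L := r x.1.
Definition zs_s (x : Mor L * GMor G) : Obj L := gs x.2.
Definition zs_mul (x y : Mor L * GMor G) : Mor L * GMor G :=
  (comp x.1 (act A x.2 y.1), gmul (res A x.2 y.1) y.2).

Definition exhaustive (P : Mor L -> Prop) (v : Obj L) (F : seq (Mor L * GMor G)) : Prop :=
  (forall a, List.In a F -> zs_mor P a /\ zs_r a = v) /\
  (forall c, zs_mor P c -> zs_r c = v ->
     exists a, List.In a F /\
       exists c' a', zs_mor P c' /\ zs_mor P a' /\
         zs_s c = zs_r c' /\ zs_s a = zs_r a' /\ zs_mul c c' = zs_mul a a').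
End ZS.

Definition in_Gamma (k : nat) (L : kgraph k.+1) (l : Mor L) : Prop :=
  deg l ord_max = 0.
Definition in_Lambda (n : nat) (L : kgraph n) (l : Mor L) : Prop := True.

(* Main.v *)
Require Import Defs.
From mathcomp Require Import all_boot.
From mathcomp Require Import zify.
From Stdlib Require Import Classical.
Local Notation kcomp := Defs.comp.
Set Implicit Arguments. Unset Strict Implicit.

Section Aux.
Variable n : nat.
Variable L : kgraph n.
Hypothesis HL : is_kgraph L.

Lemma K_rs (a b : Mor L) : s a = r b -> r (kcomp a b) = r a /\ s (kcomp a b) = s b.
Proof. by move: HL => [_ [H _]]; apply: H. Qed.
Lemma K_id (v : Obj L) : r (idm v) = v /\ s (idm v) = v.
Proof. by move: HL => [H _]; apply: H. Qed.
Lemma K_unit (a : Mor L) : kcomp (idm (r a)) a = a /\ kcomp a (idm (s a)) = a.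
Proof. by move: HL => [_ [_ [H _]]]; apply: H. Qed.
Lemma K_assoc (a b c : Mor L) : s a = r b -> s b = r c ->
      kcomp (kcomp a b) c = kcomp a (kcomp b c).
Proof. by move: HL => [_ [_ [_ [H _]]]]; apply: H. Qed.
Lemma K_deg0 (v : Obj L) i : deg (idm v) i = 0.
Proof. by move: HL => [_ [_ [_ [_ [H _]]]]]; apply: H. Qed.
Lemma K_degc (a b : Mor L) : s a = r b -> forall i, deg (kcomp a b) i = deg a i + deg b i.
Proof. by move: HL => [_ [_ [_ [_ [_ [H _]]]]]]; apply: H. Qed.
Lemma K_fact (l : Mor L) (m p : 'I_n -> nat) : (forall i, deg l i = m i + p i) ->
     (exists mu nu : Mor L, s mu = r nu /\ l = kcomp mu nu /\
        (forall i, deg mu i = m i) /\ (forall i, deg nu i = p i)).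
Proof. move: HL => [_ [_ [_ [_ [_ [_ H]]]]]] Hd; exact: (proj1 (H l m p Hd)). Qed.
Lemma K_uniq (l : Mor L) (m p : 'I_n -> nat) : (forall i, deg l i = m i + p i) ->
     (forall mu nu mu' nu' : Mor L,
        s mu = r nu -> l = kcomp mu nu -> (forall i, deg mu i = m i) -> (forall i, deg nu i = p i) ->
        s mu' = r nu' -> l = kcomp mu' nu' -> (forall i, deg mu' i = m i) -> (forall i, deg nu' i = p i) ->
        mu = mu' /\ nu = nu').
Proof. move: HL => [_ [_ [_ [_ [_ [_ H]]]]]] Hd; exact: (proj2 (H l m p Hd)). Qed.

Lemma deg0_src (nu : Mor L) : (forall i, deg nu i = 0) -> s nu = r nu.
Proof.
move=> H0.
have Hd : forall i, deg nu i = (fun _ => 0) i + (fun _ => 0) i by move=> i; rewrite H0.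
have [E _] := @K_uniq nu _ _ Hd nu (idm (s nu)) (idm (r nu)) nu
  (esym (proj1 (K_id _))) (esym (proj2 (K_unit nu))) H0 (K_deg0 _)
  (proj2 (K_id _)) (esym (proj1 (K_unit nu))) (K_deg0 _) H0.
by rewrite {1}E (proj2 (K_id _)).
Qed.

Lemma edge_first (g : Mor L) (i : 'I_n) : 0 < deg g i ->
  exists f, r f = r g /\ deg_is_unit f i.
Proof.
move=> Hg.
have Hd : forall j, deg g j = (fun j => nat_of_bool (j == i)) j
                      + (fun j => deg g j - (j == i)) j.
  move=> j /=; case: eqP => [->|_]; lia.
have [mu [nu [Hs [E [Hm _]]]]] := K_fact Hd.
exists mu; split => //; by rewrite E (proj1 (K_rs Hs)).
Qed.
End Aux.

Section Conv.
Variable k : nat.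
Variable L : kgraph k.+1.
Hypothesis HL : is_kgraph L.
Hypothesis HLc : locally_convex L.
Notation mx := (@ord_max k).

Lemma edge_prop (i : 'I_k.+1) : i != mx -> forall p (nu : Mor L), deg nu mx = p ->
  (forall j, j != mx -> deg nu j = 0) ->
  (exists f, r f = r nu /\ deg_is_unit f i) -> exists f, r f = s nu /\ deg_is_unit f i.
Proof.
move=> Hi; elim=> [|p IH] nu Hp H0 Hex.
  rewrite deg0_src //; move=> j; case: (eqVneq j mx) => [->|/H0] //.
have Hd : forall j, deg nu j = (fun j => nat_of_bool (j == mx)) j
     + (fun j => if j == mx then p else 0) j.
  move=> j /=; case: (eqVneq j mx) => [->|/H0 ->] //; rewrite Hp; lia.
have [f [nu1 [Hs [E [Hf Hn1]]]]] := K_fact HL Hd.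
have Hrf : r f = r nu by rewrite E (proj1 (K_rs HL Hs)).
have Hsn : s nu = s nu1 by rewrite E (proj2 (K_rs HL Hs)).
have := HLc (i:=mx) (j:=i) _ (e:=f) Hf.
case.
- by rewrite eq_sym.
- by rewrite Hrf.
move=> g [Hg Hgu]; rewrite Hsn; apply: (IH nu1).
- by rewrite Hn1 eqxx.
- by move=> j Hj; rewrite Hn1 (negbTE Hj).
- by exists g; rewrite Hg.
Qed.

Lemma sum_dec (N : nat) (f g : 'I_k.+1 -> nat) i :
  (forall j, g j = f j + (j == i)) -> f i < N ->
  \sum_(j < k.+1) (N - g j) < \sum_(j < k.+1) (N - f j).
Proof.
move=> Hg Hi.
rewrite (bigD1 i) //= [X in _ < X](bigD1 i) //=.
have -> : \sum_(j < k.+1 | j != i) (N - g j) = \sum_(j < k.+1 | j != i) (N - f j).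
  by apply: eq_bigr => j /negbTE Hj; rewrite Hg Hj addn0.
rewrite Hg eqxx /= addn1 ltn_add2r; lia.
Qed.

Variable lam : Mor L.
Variable v : Obj L.
Variable N : nat.

Definition Inv (tau mu nu : Mor L) : Prop :=
  s lam = r tau /\ s mu = r nu /\ kcomp lam tau = kcomp mu nu /\ r mu = v /\
  deg mu mx = 0 /\ (forall j, j != mx -> deg nu j = 0).

Definition Good (mu : Mor L) : Prop :=
  forall i, i != mx -> N <= deg mu i \/ ~ (exists f, r f = s mu /\ deg_is_unit f i).

Lemma step tau mu nu : Inv tau mu nu -> ~ Good mu ->
  exists tau' mu' nu', Inv tau' mu' nu' /\
    \sum_(j < k.+1) (N - deg mu' j) < \sum_(j < k.+1) (N - deg mu j).
Proof.
move=> [H1 [H2 [H3 [H4 [H5 H6]]]]] HG.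
have [i Hi] : exists i, ~ (i != mx -> N <= deg mu i \/ ~ (exists f, r f = s mu /\ deg_is_unit f i)).
  by apply: not_all_ex_not.
have Hi1 : i != mx by apply: NNPP => C; apply: Hi => /C.
have Hi2 : deg mu i < N.
  rewrite ltnNge; apply/negP => C; apply: Hi => _; by left.
have Hi3 : exists f, r f = s mu /\ deg_is_unit f i.
  apply: NNPP => C; apply: Hi => _; by right.
have [e [He Heu]] : exists f, r f = s nu /\ deg_is_unit f i.
  apply: (edge_prop Hi1 (erefl _) H6); by rewrite -H2.
have Hse : s nu = r e by [].
have Hd : forall j, deg (kcomp nu e) j = (fun j => nat_of_bool (j == i)) j + deg nu j.
  by move=> j /=; rewrite (K_degc HL Hse) Heu addnC.
have [ga [nu2 [Hs [E [Hga Hnu2]]]]] := K_fact HL Hd.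
have Hrga : r ga = s mu.
  by rewrite H2 -(proj1 (K_rs HL Hse)) E (proj1 (K_rs HL Hs)).
have Hstau : s tau = r e.
  by rewrite -Hse -(proj2 (K_rs HL H1)) H3 (proj2 (K_rs HL H2)).
exists (kcomp tau e), (kcomp mu ga), nu2; split; last first.
  apply: (@sum_dec N (deg mu)) Hi2 => j.
  by rewrite (K_degc HL (esym Hrga)) Hga.
split; first by rewrite (proj1 (K_rs HL Hstau)).
split; first by rewrite (proj2 (K_rs HL (esym Hrga))).
split.
  rewrite -(K_assoc HL H1 Hstau) H3 (K_assoc HL H2 Hse) E.
  by rewrite (K_assoc HL (esym Hrga) Hs).
split; first by rewrite (proj1 (K_rs HL (esym Hrga))).
split; first by rewrite (K_degc HL (esym Hrga)) H5 Hga eq_sym (negbTE Hi1).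
by move=> j Hj; rewrite Hnu2 H6.
Qed.

Lemma process M : forall tau mu nu, \sum_(j < k.+1) (N - deg mu j) <= M ->
  Inv tau mu nu -> exists tau' mu' nu', Inv tau' mu' nu' /\ Good mu'.
Proof.
elim: M => [|M IH] tau mu nu Hs HI.
  case: (classic (Good mu)) => HG; first by exists tau, mu, nu.
  have [tau' [mu' [nu' [_ Hlt]]]] := step HI HG; lia.
case: (classic (Good mu)) => HG; first by exists tau, mu, nu.
have [tau' [mu' [nu' [HI' Hlt]]]] := step HI HG.
apply: (IH tau' mu' nu') => //; lia.
Qed.
End Conv.


Lemma bound_F (n : nat) (L : kgraph n) (X : Type) (F : seq (Mor L * X)) :
  exists N, forall a, List.In a F -> forall i, deg a.1 i <= N.
Proof.
elim: F => [|x F [N HN]]; first by exists 0.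
exists (\sum_(j < n) deg x.1 j + N) => a [<-|Ha] i.
  by rewrite (bigD1 i) //= -addnA leq_addr.
by apply: leq_trans (HN a Ha i) _; rewrite leq_addl.
Qed.

Theorem lemma3p18 (k : nat) (L : kgraph k.+1) (G : groupoid (Obj L))
    (A : @ss_action k.+1 L G)
    (HL : is_kgraph L) (HLc : locally_convex L)
    (HG : is_groupoid G) (HA : is_self_similar A)
    (v : Obj L) (F : seq (Mor L * GMor G)) :
  exhaustive A (@in_Gamma k L) v F -> exhaustive A (@in_Lambda k.+1 L) v F.
Proof.
move=> [HF HexG]; split.
  move=> a Ha; have [[_ H1] H2] := HF a Ha; by split.
move=> [lam g] [_ Hlg] Hr; rewrite /zs_r /= in Hr; simpl in Hlg.
have [Hgid [Hgmul [Hgunit [Hgassoc Hginv]]]] := HG.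
have [Har [Haid [Hamul [Hadeg [Hres [Hresid [Hacomp [Hrescomp Hresmul]]]]]]]] := HA.
have [N HN] := bound_F F.
set mx := @ord_max k.
have Hd : forall j, deg lam j = (fun j => if j == mx then 0 else deg lam j) j
                             + (fun j => if j == mx then deg lam j else 0) j.
  by move=> j; case: ifP; rewrite ?addn0.
have [mu0 [nu0 [Hs0 [E0 [Hm0 Hn0]]]]] := K_fact HL Hd.
have HI0 : Inv lam v (idm (s lam)) mu0 nu0.
  split; first by rewrite (proj1 (K_id HL _)).
  split => //.
  split; first by rewrite (proj2 (K_unit HL _)).
  split; first by rewrite -Hr E0 (proj1 (K_rs HL Hs0)).
  split; first by rewrite Hm0 eqxx.
  by move=> j Hj; rewrite Hn0 (negbTE Hj).
have [tau [mu [nu [[H1 [H2 [H3 [H4 [H5 H6]]]]] HGood]]]] := process HL HLc (M := \sum_(j < k.+1) (N - deg mu0 j)) (leqnn _) HI0.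
have Hc0 : zs_mor (@in_Gamma k L) (mu, @gid _ G (s mu)) by split => //=; rewrite (proj1 (Hgid _)).
have [[al h] [HaF [[ga g1] [[be h1] [_ [_ [Hs1 [Hs2 Heq]]]]]]]] := HexG _ Hc0 H4.
have [[Hal Hsal] Hral] := HF _ HaF.
rewrite /zs_s /zs_r /= (proj2 (Hgid _)) in Hs1 Hs2.
rewrite /in_Gamma /= in Hal; simpl in Hsal, Hral.
have Heq1 : kcomp mu ga = kcomp al (act A h be).
  have := congr1 fst Heq; rewrite /zs_mul /= Hs1 Haid //.
have Hsab : s al = r (act A h be) by rewrite Har -?Hs2.
have Hdeg : forall i, deg mu i + deg ga i = deg al i + deg (act A h be) i.
  by move=> i; rewrite -(K_degc HL Hs1) -(K_degc HL Hsab) Heq1.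
have Hle : forall i, deg al i <= deg mu i.
  move=> i; case: (eqVneq i mx) => [->|Hi]; first by rewrite Hal.
  case: (HGood i Hi) => [HNi|Hno].
    by apply: leq_trans (HN _ HaF i) HNi.
  have Hga0 : deg ga i = 0.
    case: (posnP (deg ga i)) => // Hp; exfalso; apply: Hno.
    have [f [Hf Hfu]] := edge_first HL Hp; exists f; by rewrite Hf -Hs1.
  have := Hdeg i; rewrite Hga0; lia.
have Hd2 : forall j, deg mu j = deg al j + (fun j => deg mu j - deg al j) j.
  move=> j /=; have := Hle j; lia.
have [al' [xi [Hs3 [E3 [Hal' Hxi]]]]] := K_fact HL Hd2.
have Hsxi : s xi = r ga by rewrite -Hs1 E3 (proj2 (K_rs HL Hs3)).
have Hdl : forall i, deg (kcomp mu ga) i = deg al i + deg (act A h be) i.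
  by move=> i; rewrite (K_degc HL Hs1) Hdeg.
have Hs4 : s al' = r (kcomp xi ga) by rewrite (proj1 (K_rs HL Hsxi)).
have E4 : kcomp mu ga = kcomp al' (kcomp xi ga) by rewrite E3 (K_assoc HL Hs3 Hsxi).
have Hd4 : forall i, deg (kcomp xi ga) i = deg (act A h be) i.
  move=> i; rewrite (K_degc HL Hsxi) Hxi; have := Hdeg i; have := Hle i; lia.
have [Eal _] := K_uniq HL Hdl Hsab Heq1 (fun i => erefl _) (fun i => erefl _) Hs4 E4 Hal' Hd4.
rewrite -Eal in E3 Hs3.
set sig := kcomp xi nu.
have Hsxn : s xi = r nu by rewrite -H2 E3 (proj2 (K_rs HL Hs3)).
have Hsas : s al = r sig by rewrite /sig (proj1 (K_rs HL Hsxn)).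
have Hpath : kcomp lam tau = kcomp al sig.
  by rewrite H3 E3 (K_assoc HL Hs3 Hsxn).
have Hst : s tau = s sig.
  by rewrite -(proj2 (K_rs HL H1)) Hpath (proj2 (K_rs HL Hsas)).
have [Hrgi [Hsgi [Hggi _]]] := Hginv g.
have [Hrhi [Hshi [Hhhi _]]] := Hginv h.
set lam' := act A (ginv g) tau.
set be0 := act A (ginv h) sig.
have Hg1 : gs (ginv g) = r tau by rewrite Hsgi -Hlg H1.
have Hh1 : gs (ginv h) = r sig by rewrite Hshi -Hsal Hsas.
have Hrl' : r lam' = gs g by rewrite /lam' Har // Hrgi.
have Hrb0 : r be0 = gs h by rewrite /be0 Har // Hrhi.
have Hact1 : act A g lam' = tau.
  by rewrite /lam' -(Hamul _ _ _ (esym Hrgi) Hg1) Hggi -Hlg H1 Haid.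
have Hact2 : act A h be0 = sig.
  by rewrite /be0 -(Hamul _ _ _ (esym Hrhi) Hh1) Hhhi -Hsal Hsas Haid.
set y := res A g lam'.
set x := res A h be0.
have [Hgry Hgsy] := Hres g lam' (esym Hrl').
have [Hgrx Hgsx] := Hres h be0 (esym Hrb0).
have Hxy : gr x = gr y by rewrite Hgrx Hgry Hact1 Hact2 Hst.
have [Hrix [Hsix [Hxix _]]] := Hginv x.
have Hsixy : gs (ginv x) = gr y by rewrite Hsix Hxy.
exists (al, h); split => //.
exists (lam', gid (gs y)), (be0, gmul (ginv x) y).
split; first by split => //=; rewrite (proj1 (Hgid _)) Hgsy.
split; first by split => //=; rewrite (proj1 (Hgmul _ _ Hsixy)) Hrix Hgsx.
split; first by rewrite /zs_s /zs_r /= Hrl'.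
split; first by rewrite /zs_s /zs_r /= Hrb0.
rewrite /zs_mul /= Hact1 Hact2 Hpath; congr pair.
rewrite (proj2 (Hgunit y)) -(Hgassoc _ _ _ (esym Hrix) Hsixy) Hxix Hxy.
by rewrite (proj1 (Hgunit y)).
Qed.
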